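(* Assume hypotheses (A) and (B), suppose the routing matrix $P$ has a branching structure (for every $i$ the set $\{j:p_{ji}>0\}$ has at most one element), and let $\rho$ satisfy $(\rho P)_i<\rho_i$ for all $i$. Then for every $$0<\varepsilon<\min_{1\le i\le d}\frac{\rho_i}{G_{ii}}\Bigl(\frac{\mu_i}{\nu_i}-1\Bigr),$$ the function $h_{\varepsilon,\rho}(x)=\sum_{i=1}^d\prod_{j=1}^d(1+\varepsilon G_{ji}/\rho_i)^{x^j}$ satisfies $$\limsup_{|x|\to\infty}\frac{\mathcal{L}h_{\varepsilon,\rho}(x)}{h_{\varepsilon,\rho}(x)}=-\varepsilon\min_{1\le i\le d}\Bigl(\frac{\mu_i}{\rho_i+\varepsilon G_{ii}}-\frac{\nu_i}{\rho_i}\Bigr)<0.$$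
   Context: Jackson network with $d$ queues: arrival rates $\lambda_i\ge0$, service rates $\mu_i>0$, routing matrix $P=(p_{ij})_{i,j=1}^d$ nonnegative with $p_{ii}=0$, $\sum_jp_{ij}\le1$, $p_{i0}=1-\sum_jp_{ij}$. With $\epsilon^i$ the unit vectors, $q(\epsilon^i)=\lambda_i$, $q(-\epsilon^i)=\mu_ip_{i0}$, $q(\epsilon^j-\epsilon^i)=\mu_ip_{ij}$, $q=0$ otherwise; the process on $\mathbb{Z}_+^d$ has generator $\mathcal{L}f(y)=\sum_{z\in\mathbb{Z}_+^d}q(z-y)(f(z)-f(y))$. Hypothesis (A): $(q(x-y))_{x,y\in\mathbb{Z}^d}$ irreducible (equivalently spectral radius of $P$ $<1$ and for every $i$ some $\lambda_jp^{(n)}_{ji}>0$); the traffic equations $\nu_j=\lambda_j+\sum_i\nu_ip_{ij}$ have a unique solution with $\nu_i>0$. Hypothesis (B): $\nu_i<\mu_i$ for all $i$. $G=(I-P)^{-1}$, $(\rho P)_i=\sum_j\rho_jp_{ji}$. *)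

(* Defs.v *)
From HB Require Import structures.
From mathcomp Require Import all_boot all_order all_algebra.
From mathcomp Require Import all_classical all_reals all_analysis.
Set Implicit Arguments. Unset Strict Implicit. Unset Printing Implicit Defensive.
Import Order.TTheory GRing.Theory Num.Theory.
Local Open Scope classical_set_scope.
Local Open Scope ring_scope.

Definition Zvec (d : nat) := {ffun 'I_d -> int}.

Definition uvec d (i : 'I_d) : Zvec d := [ffun k => ((k == i) : nat)%:Z].

Definition nonneg d (x : Zvec d) : bool := [forall k, 0 <= x k].

Definition norm1 d (x : Zvec d) : nat := (\sum_(k < d) `|x k|)%N.

Section Jackson.
Variables (R : realType) (d : nat).
Variables (lam mu : 'I_d -> R) (P : 'M[R]_d).

Definition p0 (i : 'I_d) : R := 1 - \sum_(j < d) P i j.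

(* the jump rates q(z), z in Z^d: q(e^i) = lam_i, q(-e^i) = mu_i p_{i0},
   q(e^j - e^i) = mu_i p_{ij}, q = 0 otherwise.  (The listed vectors are
   pairwise distinct for i <> j, and p_{ii} = 0, so this sum is exactly the
   case definition.) *)
Definition qrate (z : Zvec d) : R :=
  \sum_(i < d) lam i * (z == uvec i)%:R
  + \sum_(i < d) mu i * p0 i * (z == - uvec i)%:R
  + \sum_(i < d) \sum_(j < d) mu i * P i j * (z == uvec j - uvec i)%:R.

(* Generator L f (y) = sum_{z in Z_+^d} q(z - y) (f z - f y).
   Since q vanishes outside {-1,0,1}^d, the sum is over z = y + w - 1 with
   w in {0,1,2}^d, restricted to z in Z_+^d. *)
Definition gen (f : Zvec d -> R) (y : Zvec d) : R :=
  \sum_(w : {ffun 'I_d -> 'I_3})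
    let z : Zvec d := [ffun k => y k + (w k : nat)%:Z - 1] in
    if nonneg z then qrate (z - y) * (f z - f y) else 0.

Definition irreducibleA : Prop :=
  forall x y : Zvec d, exists s : seq (Zvec d),
    path (fun a b : Zvec d => 0 < qrate (b - a)) x s && (last x s == y).

End Jackson.

Definition Gmat (R : realType) d (P : 'M[R]_d) : 'M[R]_d := invmx (1%:M - P).

Definition h_fun (R : realType) d (G : 'M[R]_d) (eps : R) (rho : 'I_d -> R)
  (x : Zvec d) : R :=
  \sum_(i < d) \prod_(j < d) (1 + eps * G j i / rho i) ^ (x j).

Definition limsup_infty (R : realType) d (f : Zvec d -> R) : \bar R :=
  ereal_inf [set ereal_sup [set (f x)%:E | x in [set x | nonneg x /\ (N <= norm1 x)%N]]
            | N in [set: nat]].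

(* minimum over i in {1..d} (in \bar R; finite when d >= 1) *)
Definition emin (R : realType) d (F : 'I_d -> R) : \bar R :=
  \big[mine/+oo%E]_(i < d) (F i)%:E.

(* Main.v *)
Require Import Defs.
From HB Require Import structures.
From mathcomp Require Import all_boot all_order all_algebra.
From mathcomp Require Import all_classical all_reals all_analysis.
From mathcomp Require Import ring lra zify.
Import Order.TTheory GRing.Theory Num.Theory.
Local Open Scope classical_set_scope.
Local Open Scope ring_scope.

Lemma exists_max (R : realType) (I : finType) (i0 : I) (F : I -> R) :
  exists j, forall i, F i <= F j.
Proof.
case: (arg_maxP (i0:=i0) (P:=predT) F isT) => j _ H.
by exists j => i; apply: H.
Qed.

Lemma exists_min (R : realType) (I : finType) (i0 : I) (F : I -> R) :
  exists j, forall i, F j <= F i.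
Proof.
case: (arg_minP (i0:=i0) (P:=predT) F isT) => j _ H.
by exists j => i; apply: H.
Qed.

Lemma sum_delta (R : realType) (n : nat) (w : 'I_n -> R) i :
  \sum_(j < n) w j * (j == i)%:R = w i.
Proof.
rewrite (bigD1 i) //= big1 ?addr0; first by rewrite eqxx mulr1.
by move=> k /negbTE Hk; rewrite Hk mulr0.
Qed.

Lemma bernoulli (R : realType) (q : R) n : 1 <= q -> 1 + n%:R * (q - 1) <= q ^+ n.
Proof.
move=> Hq; elim: n => [|n IH]; first by rewrite mul0r addr0 expr0.
rewrite exprS -natr1.
have Hn : 0 <= n%:R :> R by [].
have : q * (1 + n%:R * (q - 1)) <= q * q ^+ n by apply: ler_wpM2l => //; lra.
have : 0 <= n%:R * ((q - 1) * (q - 1)) by apply: mulr_ge0 => //; nra.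
nra.
Qed.

Lemma big_power (R : realType) (q C : R) : 1 < q -> exists n, C <= q ^+ n.
Proof.
move=> Hq; set x := `|C| / (q - 1).
have Hx : 0 <= x by apply: divr_ge0 => //; lra.
have := archi_boundP Hx; set n := Num.Def.archi_bound x => Hn.
exists n; apply: le_trans (@bernoulli R q n (ltW Hq)).
have HC : C <= `|C| by exact: ler_norm.
have E : x * (q - 1) = `|C| by rewrite /x divfK // subr_eq0 gt_eqF.
have : x * (q - 1) <= n%:R * (q - 1) by apply: ler_wpM2r; [lra | exact: ltW].
lra.
Qed.

Lemma small_power (R : realType) (t e : R) : 0 <= t -> t < 1 -> 0 < e ->
  exists n, t ^+ n <= e.
Proof.
move=> Ht0 Ht1 He; case: (eqVneq t 0) => [->|Htn].
  by exists 1%N; rewrite expr1 ltW.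
have Htp : 0 < t by rewrite lt_def Htn Ht0.
have Hq : 1 < t^-1 by rewrite invf_gt1.
have [n Hn] := @big_power R t^-1 e^-1 Hq.
exists n; rewrite exprVn in Hn.
set X := t ^+ n in Hn *.
have HX : 0 < X by rewrite exprn_gt0.
have E1 : X * X^-1 = 1 by rewrite mulfV // gt_eqF.
have E2 : e * e^-1 = 1 by rewrite mulfV // gt_eqF.
have : e * e^-1 <= e * X^-1 by apply: ler_wpM2l => //; exact: ltW.
rewrite E2 => H1.
nra.
Qed.

Lemma emin_le (R : realType) d (g : 'I_d -> R) k : (emin g <= (g k)%:E)%E.
Proof. by rewrite /emin (bigD1 k) //= ge_min lexx. Qed.

Lemma emin_eq (R : realType) d (g : 'I_d -> R) j : (forall k, g j <= g k) ->
  emin g = (g j)%:E.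
Proof.
move=> Hj; apply/le_anti/andP; split; first exact: emin_le.
rewrite /emin; apply: (big_ind (fun x => (g j)%:E <= x)%E) => //.
- exact: leey.
- by move=> x y Hx Hy; rewrite le_min Hx Hy.
- by move=> k _; rewrite lee_fin.
Qed.

Section Part1.
Variables (R : realType) (d : nat) (lam mu : 'I_d -> R) (P : 'M[R]_d).
Hypothesis Pge0 : forall i j, 0 <= P i j.
Hypothesis Pii : forall i, P i i = 0.
Hypothesis Psum : forall i, \sum_(j < d) P i j <= 1.
Hypothesis lamge0 : forall i, 0 <= lam i.
Hypothesis mugt0 : forall i, 0 < mu i.
Hypothesis irr : irreducibleA lam mu P.

Definition phi (T : pred 'I_d) (v : Zvec d) : int := \sum_(k < d) (T k)%:Z * v k.

Lemma phiB T (a b : Zvec d) : phi T (a - b) = phi T a - phi T b.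
Proof.
rewrite /phi -sumrB; apply: eq_bigr => k _; rewrite !ffunE; ring.
Qed.

Lemma phiN T (a : Zvec d) : phi T (- a) = - phi T a.
Proof.
rewrite /phi -sumrN; apply: eq_bigr => k _; rewrite !ffunE; ring.
Qed.

Lemma phi0 T : phi T 0 = 0.
Proof. by rewrite /phi big1 // => k _; rewrite ffunE mulr0. Qed.

Lemma phiu T i : phi T (uvec i) = (T i)%:Z.
Proof.
rewrite /phi (bigD1 i) //= big1 ?addr0; first by rewrite ffunE eqxx mulr1.
by move=> k /negbTE Hk; rewrite ffunE Hk mulr0.
Qed.

Lemma qrate_phi (T : pred 'I_d) :
  (forall k, T k -> p0 P k = 0) ->
  (forall k j, T k -> 0 < P k j -> T j) ->
  forall v, 0 < qrate lam mu P v -> 0 <= phi T v.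
Proof.
move=> HT1 HT2 v Hq; rewrite leNgt; apply/negP => Hneg.
suff: qrate lam mu P v <= 0 by rewrite leNgt Hq.
rewrite /qrate -!addrA; apply: ler_wnDl; first apply: sumr_le0 => i _.
  case: eqP => [Hv|_]; last by rewrite mulr0.
  by move: Hneg; rewrite Hv phiu; case: (T i).
apply: ler_wnDl; first apply: sumr_le0 => i _.
  case: eqP => [Hv|_]; last by rewrite mulr0.
  move: Hneg; rewrite Hv phiN phiu; case HTi: (T i) => // _.
  by rewrite HT1 // mulr0 mul0r.
apply: sumr_le0 => i _; apply: sumr_le0 => j _.
case: eqP => [Hv|_]; last by rewrite mulr0.
move: Hneg; rewrite Hv phiB !phiu.
case HTi: (T i); case HTj: (T j) => // _.
have : ~~ (0 < P i j) by apply/negP => /(HT2 _ _ HTi); rewrite HTj.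
rewrite -leNgt => HP; rewrite mulr1.
have -> : P i j = 0 by apply/eqP; rewrite eq_le HP Pge0.
by rewrite mulr0.
Qed.

Lemma path_phi (T : pred 'I_d) :
  (forall k, T k -> p0 P k = 0) ->
  (forall k j, T k -> 0 < P k j -> T j) ->
  forall s x, path (fun a b : Zvec d => 0 < qrate lam mu P (b - a)) x s ->
  phi T x <= phi T (last x s).
Proof.
move=> H1 H2; elim=> [|y s IH] x //= /andP[Hxy Hp].
apply: le_trans (IH _ Hp).
have := @qrate_phi T H1 H2 _ Hxy; rewrite phiB; lia.
Qed.

Lemma minprin (u : 'I_d -> R) :
  (forall k, \sum_(j < d) P k j * u j <= u k) -> forall k, 0 <= u k.
Proof.
move=> Hu k0; rewrite leNgt; apply/negP => Hk0.
have [t Ht] := @exists_min R _ k0 u.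
set m := u t.
have Hm : m < 0 by apply: le_lt_trans (Ht k0) Hk0.
pose T := fun i => u i == m.
have key : forall k, T k -> (p0 P k = 0) /\ (forall j, 0 < P k j -> T j).
  move=> k /eqP Hk.
  have Hs : \sum_(j < d) P k j * (u j - m) = \sum_(j < d) P k j * u j - m * \sum_(j < d) P k j.
    rewrite mulr_sumr -sumrB; apply: eq_bigr => j _; ring.
  have Hge : 0 <= \sum_(j < d) P k j * (u j - m).
    apply: sumr_ge0 => j _; apply: mulr_ge0 => //; rewrite subr_ge0; exact: Ht.
  have HS := Psum k.
  have HSk := Hu k.
  have E1 : m * (1 - \sum_(j < d) P k j) = 0.
    move: Hs Hge HS HSk; rewrite Hk.
    set S := \sum_(j < d) P k j; set A := \sum_(j < d) P k j * (u j - m).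
    set B := \sum_(j < d) P k j * u j => Hs Hge HS HSk.
    apply/eqP; rewrite eq_le; apply/andP; split; nra.
  have E2 : \sum_(j < d) P k j * (u j - m) = 0.
    move: Hs Hge HS HSk E1; rewrite Hk.
    set S := \sum_(j < d) P k j; set A := \sum_(j < d) P k j * (u j - m).
    set B := \sum_(j < d) P k j * u j => Hs Hge HS HSk E1.
    apply/eqP; rewrite eq_le Hge andbT; nra.
  split.
    by rewrite /p0; apply: (mulfI (ltr0_neq0 Hm)); rewrite mulr0.
  move=> j Hj; apply/eqP.
  have Hnn : forall j, predT j -> 0 <= P k j * (u j - m).
    by move=> j' _; apply: mulr_ge0 => //; rewrite subr_ge0; exact: Ht.
  have Z := psumr_eq0P (P := predT) (F := fun j => P k j * (u j - m)) Hnn E2 (i := j) isT.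
  move/eqP: Z; rewrite mulf_eq0 (gt_eqF Hj) /= subr_eq0 => /eqP ->.
  done.
have [s /andP[Hp /eqP Hl]] := irr 0 (- uvec t).
have := @path_phi T (fun k Hk => (key k Hk).1) (fun k j Hk => (key k Hk).2 j) _ _ Hp.
by rewrite Hl phi0 phiN phiu /T eqxx.
Qed.

Lemma lmul_entry n (M : 'M[R]_(d,n)) k i :
  ((1%:M - P) *m M) k i = M k i - \sum_j P k j * M j i.
Proof. by rewrite mulmxBl mul1mx !mxE. Qed.

Lemma rmul_entry n (M : 'M[R]_(n,d)) k i :
  (M *m (1%:M - P)) k i = M k i - \sum_j M k j * P j i.
Proof. by rewrite mulmxBr mulmx1 !mxE. Qed.

Lemma unitA : (1%:M - P) \in unitmx.
Proof.
rewrite unitmxE unitfE -det_tr; apply/negP => /det0P [v Hv0 Hv].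
have Hv' : (1%:M - P) *m v^T = 0 by rewrite -[_ *m _]trmxK trmx_mul trmxK Hv trmx0.
have E : forall k, \sum_j P k j * v 0 j <= v 0 k /\ \sum_j P k j * (- v 0 j) <= - v 0 k.
  move=> k; have := congr1 (fun M : 'M[R]_(d,1) => M k 0) Hv'; rewrite lmul_entry !mxE /= => H.
  have H' : \sum_j P k j * v 0 j = v 0 k.
    have -> : \sum_j P k j * v 0 j = \sum_j P k j * v^T j 0 by apply: eq_bigr => j _; rewrite mxE.
    lra.
  split; first by rewrite H'.
  have -> : \sum_j P k j * - v 0 j = - \sum_j P k j * v 0 j.
    by rewrite -sumrN; apply: eq_bigr => j _; rewrite mulrN.
  by rewrite H'.
apply/negP: Hv0; rewrite negbK; apply/eqP/rowP => k; rewrite mxE.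
have h1 := @minprin (fun k => v 0 k) (fun k => (E k).1) k.
have h2 := @minprin (fun k => - v 0 k) (fun k => (E k).2) k.
lra.
Qed.

Local Notation G := (Gmat P).

Lemma idmx_entry (k i : 'I_d) : (1%:M : 'M[R]_d) k i = (k == i)%:R.
Proof. by rewrite mxE. Qed.

Lemma Gleft k i : G k i - \sum_j P k j * G j i = (k == i)%:R.
Proof. by rewrite -lmul_entry /Gmat mulmxV ?unitA // idmx_entry. Qed.

Lemma Gright k i : G k i - \sum_j G k j * P j i = (k == i)%:R.
Proof. by rewrite -rmul_entry /Gmat mulVmx ?unitA // idmx_entry. Qed.

Lemma Gge0 k i : 0 <= G k i.
Proof.
apply: (@minprin (fun k => G k i)) => {}k.
have := Gleft k i; rewrite -subr_ge0 => ->; exact: ler0n.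
Qed.

Lemma Gii_ge1 i : 1 <= G i i.
Proof.
have H : G i i - \sum_j G i j * P j i = 1 by rewrite Gright eqxx.
have : 0 <= \sum_j G i j * P j i by apply: sumr_ge0 => j _; apply: mulr_ge0; [exact: Gge0|exact: Pge0].
lra.
Qed.

Lemma rowG (w : 'I_d -> R) i :
  \sum_k (w k - \sum_j w j * P j k) * G k i = w i.
Proof.
have E : \sum_k (\sum_j w j * P j k) * G k i = \sum_j w j * (G j i - (j == i)%:R).
  under eq_bigr do rewrite mulr_suml.
  rewrite exchange_big /=; apply: eq_bigr => j _.
  have -> : G j i - (j == i)%:R = \sum_k P j k * G k i by rewrite -Gleft; ring.
  by rewrite big_distrr /=; apply: eq_bigr => k _; rewrite mulrA.
under eq_bigr do rewrite mulrBl.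
rewrite sumrB E.
under [X in _ - X]eq_bigr do rewrite mulrBr.
rewrite sumrB sum_delta; ring.
Qed.

Lemma sum_ge_term (F : 'I_d -> R) m : (forall j, 0 <= F j) -> F m <= \sum_j F j.
Proof.
move=> H; rewrite (bigD1 m) //= lerDl; apply: sumr_ge0 => j _; exact: H.
Qed.

Variable rho : 'I_d -> R.
Hypothesis rhoP : forall i, \sum_j rho j * P j i < rho i.

Lemma rho_pos i : 0 < rho i.
Proof.
rewrite -(rowG rho i).
have Hc : forall k, 0 < rho k - \sum_j rho j * P j k by move=> k; rewrite subr_gt0.
apply: (lt_le_trans _ (@sum_ge_term (fun k => (rho k - \sum_j rho j * P j k) * G k i) i _)).
  have := Hc i; have := Gii_ge1 i; nra.
move=> k; apply: mulr_ge0; [exact: ltW | exact: Gge0].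
Qed.

Hypothesis branch : forall i j k, 0 < P j i -> 0 < P k i -> j = k.

Lemma G_parent p k l : 0 < P p k -> l != k -> G l k = G l p * P p k.
Proof.
move=> Hp Hlk; have H : G l k - \sum_j G l j * P j k = 0 by rewrite Gright (negbTE Hlk).
have -> : G l k = \sum_j G l j * P j k by lra.
rewrite (bigD1 p) //= big1 ?addr0 // => m Hm.
have : ~~ (0 < P m k) by apply/negP => /(branch _ _ _ Hp) Hpm; rewrite Hpm eqxx in Hm.
rewrite -leNgt => Hle; have -> : P m k = 0 by apply/eqP; rewrite eq_le Hle Pge0.
by rewrite mulr0.
Qed.

Lemma G_noparent k l : (forall m, ~~ (0 < P m k)) -> l != k -> G l k = 0.
Proof.
move=> Hn Hlk; have H : G l k - \sum_j G l j * P j k = 0 by rewrite Gright (negbTE Hlk).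
have -> : G l k = \sum_j G l j * P j k by lra.
rewrite big1 // => m _; have := Hn m; rewrite -leNgt => Hle.
have -> : P m k = 0 by apply/eqP; rewrite eq_le Hle Pge0.
by rewrite mulr0.
Qed.

Lemma rho_parent p k : 0 < P p k -> rho p * P p k < rho k.
Proof.
move=> Hp; apply: le_lt_trans (rhoP k).
apply: (@sum_ge_term (fun j => rho j * P j k)) => j.
apply: mulr_ge0; [exact: ltW (rho_pos j) | exact: Pge0].
Qed.

Lemma G_up l k : l != k -> 0 < G l k ->
  exists p, [/\ 0 < P p k, 0 < G l p & G l k / rho k < G l p / rho p].
Proof.
move=> Hlk HG; case: (pickP (fun m => 0 < P m k)) => [p Hp|Hn]; last first.
  by move: HG; rewrite (@G_noparent k l (fun m => negbT (Hn m)) Hlk) ltxx.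
have E := @G_parent p k l Hp Hlk.
have HGp : 0 < G l p.
  rewrite lt_def Gge0 andbT; apply/eqP => H0; move: HG; rewrite E H0 mul0r ltxx //.
exists p; split => //.
rewrite E ltr_pdivrMr ?rho_pos // mulrAC ltr_pdivlMr ?rho_pos //.
have := @rho_parent p k Hp; have := rho_pos k; have := rho_pos p; nra.
Qed.

Lemma F_max j k : G j k / rho k <= G j j / rho j.
Proof.
have Hj0 : 0 < G j j / rho j.
  by apply: divr_gt0; [exact: lt_le_trans ltr01 (Gii_ge1 j) | exact: rho_pos].
have [k0 Hk0] := @exists_max R _ j (fun k => G j k / rho k).
apply: le_trans (Hk0 k) _.
case: (eqVneq j k0) => [<-//|Hjk].
case: (eqVneq (G j k0) 0) => [->|HG0]; first by rewrite mul0r ltW.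
have HG : 0 < G j k0 by rewrite lt_def HG0 Gge0.
have [p [_ _ Hlt]] := @G_up j k0 Hjk HG.
by have := Hk0 p; rewrite leNgt Hlt.
Qed.

Lemma F_strict j k : k != j -> G j k / rho k < G j j / rho j.
Proof.
move=> Hkj.
have Hj0 : 0 < G j j / rho j.
  by apply: divr_gt0; [exact: lt_le_trans ltr01 (Gii_ge1 j) | exact: rho_pos].
case: (eqVneq (G j k) 0) => [->|HG0]; first by rewrite mul0r.
have HG : 0 < G j k by rewrite lt_def HG0 Gge0.
have Hjk : j != k by rewrite eq_sym.
have [p [_ _ Hlt]] := @G_up j k Hjk HG.
exact: lt_le_trans Hlt (F_max j p).
Qed.

Definition zw (y : Zvec d) (w : {ffun 'I_d -> 'I_3}) : Zvec d :=
  [ffun k => y k + (w k : nat)%:Z - 1].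

Lemma sum_pick (y v : Zvec d) (F : Zvec d -> R) : (forall k, -1 <= v k <= 1) ->
  \sum_(w : {ffun 'I_d -> 'I_3}) (nonneg (zw y w))%:R * ((zw y w - y == v)%:R * F (zw y w))
  = (nonneg (y + v))%:R * F (y + v).
Proof.
move=> Hv.
pose w0 : {ffun 'I_d -> 'I_3} := [ffun k => inord (absz (v k + 1))].
have Hw0 : forall k, ((w0 k : nat)%:Z = v k + 1).
  move=> k; rewrite ffunE inordK; last by have := Hv k; lia.
  by have := Hv k; lia.
have A : zw y w0 = y + v.
  by apply/ffunP => k; have := Hw0 k; rewrite !ffunE => ->; ring.
have B : forall w, (zw y w - y == v) = (w == w0).
  move=> w; apply/eqP/eqP => [H|->]; last by rewrite A addrC addKr.
  apply/ffunP => k; apply: val_inj => /=.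
  have := congr1 (fun f : Zvec d => f k) H; rewrite !ffunE => Hk.
  suff E : Posz (w k) = Posz (w0 k) by move: E; rewrite ffunE; case.
  by rewrite Hw0 -Hk; ring.
under eq_bigr => w _ do rewrite B.
rewrite (bigD1 w0) //= big1 ?addr0; first by rewrite eqxx mul1r A.
by move=> w /negbTE ->; rewrite mul0r mulr0.
Qed.

Lemma if_mul (b : bool) (X : R) : (if b then X else 0) = b%:R * X.
Proof. by case: b; rewrite ?mul1r ?mul0r. Qed.

Lemma uvec_rng (i k : 'I_d) : -1 <= uvec i k <= 1.
Proof. rewrite ffunE; case: (k == i) => /=; lia. Qed.

Lemma uvecN_rng (i k : 'I_d) : -1 <= (- uvec i) k <= 1.
Proof. rewrite !ffunE; case: (k == i) => /=; lia. Qed.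

Lemma uvecB_rng (i j k : 'I_d) : -1 <= (uvec j - uvec i) k <= 1.
Proof. rewrite !ffunE; case: (k == i); case: (k == j) => /=; lia. Qed.

Lemma gen_expand (f : Zvec d -> R) y :
  gen lam mu P f y =
    \sum_i lam i * ((nonneg (y + uvec i))%:R * (f (y + uvec i) - f y))
  + \sum_i mu i * p0 P i * ((nonneg (y + - uvec i))%:R * (f (y + - uvec i) - f y))
  + \sum_i \sum_j mu i * P i j *
      ((nonneg (y + (uvec j - uvec i)))%:R * (f (y + (uvec j - uvec i)) - f y)).
Proof.
have E : gen lam mu P f y = \sum_(w : {ffun 'I_d -> 'I_3})
    (nonneg (zw y w))%:R * (qrate lam mu P (zw y w - y) * (f (zw y w) - f y)).
  by apply: eq_bigr => w _; cbv zeta; rewrite if_mul.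
rewrite E /qrate.
under eq_bigr do rewrite 2!mulrDl 2!mulrDr.
rewrite !big_split /=.
congr (_ + _ + _).
- under eq_bigr do rewrite mulr_suml mulr_sumr.
  rewrite exchange_big /=; apply: eq_bigr => i _.
  rewrite -(@sum_pick y (uvec i) (fun z => f z - f y)); last exact: uvec_rng.
  rewrite mulr_sumr.
  by apply: eq_bigr => w _; ring.
- under eq_bigr do rewrite mulr_suml mulr_sumr.
  rewrite exchange_big /=; apply: eq_bigr => i _.
  rewrite -(@sum_pick y (- uvec i) (fun z => f z - f y)); last exact: uvecN_rng.
  rewrite mulr_sumr.
  by apply: eq_bigr => w _; ring.
- under eq_bigr do rewrite mulr_suml mulr_sumr.
  rewrite exchange_big /=; apply: eq_bigr => i _.
  under eq_bigr do rewrite mulr_suml mulr_sumr.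
  rewrite exchange_big /=; apply: eq_bigr => j _.
  rewrite -(@sum_pick y (uvec j - uvec i) (fun z => f z - f y)); last exact: uvecB_rng.
  rewrite mulr_sumr.
  by apply: eq_bigr => w _; ring.
Qed.


Variable eps : R.
Hypothesis eps_gt0 : 0 < eps.
Variable nu : 'I_d -> R.
Hypothesis traffic : forall j, nu j = lam j + \sum_i nu i * P i j.

Lemma nu_G k : nu k = \sum_i lam i * G i k.
Proof.
rewrite -{1}(rowG nu k); apply: eq_bigr => i _; congr (_ * _).
by rewrite (traffic i); ring.
Qed.

Definition a (l k : 'I_d) : R := 1 + eps * G l k / rho k.
Definition fk (k : 'I_d) (x : Zvec d) : R := \prod_(j < d) a j k ^ (x j).

Lemma a_ge1 l k : 1 <= a l k.
Proof.
rewrite /a lerDl; apply: divr_ge0; last exact: ltW (rho_pos k).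
apply: mulr_ge0; [exact: ltW | exact: Gge0].
Qed.

Lemma a_gt0 l k : 0 < a l k.
Proof. exact: lt_le_trans ltr01 (a_ge1 l k). Qed.

Lemma a_neq0 l k : a l k != 0.
Proof. by rewrite gt_eqF // a_gt0. Qed.

Lemma fk_shift k y v : fk k (y + v) = fk k y * \prod_j a j k ^ (v j).
Proof.
rewrite /fk -big_split; apply: eq_bigr => j _ /=.
by rewrite ffunE expfzDr // a_neq0.
Qed.

Lemma prod_u k i : \prod_j a j k ^ (uvec i j) = a i k.
Proof.
rewrite (bigD1 i) //= big1 ?mulr1; first by rewrite ffunE eqxx expr1z.
by move=> j /negbTE Hj; rewrite ffunE Hj expr0z.
Qed.

Lemma prod_Nu k i : \prod_j a j k ^ ((- uvec i) j) = (a i k)^-1.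
Proof.
under eq_bigr do rewrite ffunE -invr_expz.
by rewrite prodfV prod_u.
Qed.

Lemma prod_B k i j : \prod_l a l k ^ ((uvec j - uvec i) l) = a j k * (a i k)^-1.
Proof.
under eq_bigr do rewrite ffunE expfzDr ?a_neq0 //.
rewrite big_split /= prod_u.
congr (_ * _); exact: (prod_Nu k i).
Qed.

Lemma nonneg_add_u (y : Zvec d) i : nonneg y -> nonneg (y + uvec i).
Proof.
move=> /forallP H; apply/forallP => k; rewrite !ffunE; have := H k.
case: (k == i) => /=; lia.
Qed.

Lemma nonneg_sub_u (y : Zvec d) i : nonneg y -> nonneg (y + - uvec i) = (0 < y i).
Proof.
move=> /forallP H; apply/forallP/idP => [/(_ i)|Hi k]; rewrite !ffunE ?eqxx /=.
  lia.
have := H k; case: eqP => [->|_] /=; lia.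
Qed.

Lemma nonneg_mv (y : Zvec d) i j : nonneg y -> j != i ->
  nonneg (y + (uvec j - uvec i)) = (0 < y i).
Proof.
move=> /forallP H Hji; apply/forallP/idP => [/(_ i)|Hi k]; rewrite !ffunE ?eqxx /=.
  by rewrite eq_sym (negbTE Hji) /=; lia.
have := H k; case: eqP => [->|_]; case: eqP => [->|_] /=; lia.
Qed.

Lemma bracket i k :
  p0 P i * ((a i k)^-1 - 1) + \sum_j P i j * (a j k * (a i k)^-1 - 1)
  = - (eps * (i == k)%:R / rho k) * (a i k)^-1.
Proof.
have Hr : rho k != 0 by rewrite gt_eqF // rho_pos.
have Ha := a_neq0 i k.
have HG : \sum_j P i j * G j k = G i k - (i == k)%:R by rewrite -(Gleft i k); ring.
have HT : \sum_j P i j * (a j k * (a i k)^-1 - 1)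
   = (\sum_j P i j + eps / rho k * (G i k - (i == k)%:R)) * (a i k)^-1 - \sum_j P i j.
  rewrite -HG mulr_sumr -big_split /= mulr_suml -sumrB.
  by apply: eq_bigr => j _; rewrite /a; ring.
rewrite HT /p0.
move: Ha; rewrite /a => Ha.
set S := \sum_j P i j. set g := G i k. set b := (i == k)%:R.
field.
rewrite Hr /= gt_eqF //; have := rho_pos k; have := Gge0 i k; have := eps_gt0; rewrite /g; nra.
Qed.

Lemma gen_fk k (y : Zvec d) : nonneg y ->
  gen lam mu P (fk k) y = fk k y * (eps * nu k / rho k
     - ((0 < y k)%R : bool)%:R * (eps * mu k / (rho k + eps * G k k))).
Proof.
move=> Hy; rewrite gen_expand.
have T1 : \sum_i lam i * ((nonneg (y + uvec i))%:R * (fk k (y + uvec i) - fk k y))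
    = fk k y * (eps * nu k / rho k).
  rewrite nu_G mulr_sumr mulr_suml mulr_sumr; apply: eq_bigr => i _.
  rewrite nonneg_add_u // fk_shift prod_u /a /=; ring.
have Ei : forall i,
    mu i * p0 P i * ((nonneg (y + - uvec i))%:R * (fk k (y + - uvec i) - fk k y))
  + \sum_j mu i * P i j * ((nonneg (y + (uvec j - uvec i)))%:R
        * (fk k (y + (uvec j - uvec i)) - fk k y))
  = ((0 < y i)%R : bool)%:R * mu i * fk k y * (- (eps * (i == k)%:R / rho k) * (a i k)^-1).
  move=> i; rewrite -bracket.
  have Hj : forall j, mu i * P i j * ((nonneg (y + (uvec j - uvec i)))%:R
        * (fk k (y + (uvec j - uvec i)) - fk k y))
      = ((0 < y i)%R : bool)%:R * mu i * fk k y * (P i j * (a j k * (a i k)^-1 - 1)).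
    move=> j; case: (eqVneq j i) => [->|Hji]; first by rewrite Pii; ring.
    by rewrite nonneg_mv // fk_shift prod_B; ring.
  under eq_bigr => j _ do rewrite Hj.
  by rewrite nonneg_sub_u // fk_shift prod_Nu -mulr_sumr; ring.
rewrite -addrA -big_split /=.
rewrite (eq_bigr _ (fun i _ => Ei i)).
rewrite T1 (bigD1 k) //= big1 ?addr0; last first.
  by move=> i /negbTE Hik; rewrite Hik /= mulr0n mulr0 mul0r oppr0 mul0r mulr0.
rewrite eqxx /a.
have Hr : rho k != 0 by rewrite gt_eqF // rho_pos.
have Ha := a_neq0 k k; move: Ha; rewrite /a => Ha.
have Hs : rho k + eps * G k k != 0.
  rewrite gt_eqF //; have := rho_pos k; have := Gge0 k k; have := eps_gt0; nra.
have -> : (true : nat)%:R = 1 :> R by [].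
field.
by rewrite Hr Hs.
Qed.

Definition hh (y : Zvec d) : R := \sum_k fk k y.

Lemma hh_eq y : h_fun (Gmat P) eps rho y = hh y.
Proof. by []. Qed.

Lemma fk_gt0 k y : 0 < fk k y.
Proof. by apply: prodr_gt0 => j _; apply: exprz_gt0; exact: a_gt0. Qed.

Lemma fk_le_hh k y : fk k y <= hh y.
Proof. by apply: (@sum_ge_term (fun k => fk k y)) => j; exact: ltW (fk_gt0 j y). Qed.

Lemma hh_gt0 (i : 'I_d) y : 0 < hh y.
Proof. exact: lt_le_trans (fk_gt0 i y) (fk_le_hh i y). Qed.

Lemma fk_nat k y : nonneg y -> fk k y = \prod_j a j k ^+ (absz (y j)).
Proof.
move=> /forallP Hy; apply: eq_bigr => j _.
by rewrite exprnP gez0_abs // Hy.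
Qed.

Lemma prod_ge1 (Q : pred 'I_d) (F : 'I_d -> R) : (forall j, 1 <= F j) -> 1 <= \prod_(j | Q j) F j.
Proof.
move=> H; apply: (big_ind (fun x => 1 <= x)) => // x y Hx Hy.
exact: mulr_ege1.
Qed.

Lemma fk_ge_diag l y : nonneg y -> a l l ^+ (absz (y l)) <= fk l y.
Proof.
move=> Hy; rewrite fk_nat // (bigD1 l) //=.
apply: ler_peMr; first exact: exprn_ge0 (ltW (a_gt0 l l)).
by apply: prod_ge1 => j; exact: exprn_ege1 (a_ge1 j l).
Qed.

Definition Amax : R := \sum_l \sum_k a l k.

Lemma Amax_ge l k : a l k <= Amax.
Proof.
apply: le_trans (@sum_ge_term (fun l => \sum_k a l k) l _).
  by apply: (@sum_ge_term (fun k => a l k)) => j; exact: ltW (a_gt0 l j).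
by move=> j; apply: sumr_ge0 => m _; exact: ltW (a_gt0 j m).
Qed.

Definition bmin : R := 1 + eps / \sum_l rho l.

Lemma bmin_gt1 (i : 'I_d) : 1 < bmin.
Proof.
rewrite /bmin ltrDl; apply: divr_gt0 => //.
apply: lt_le_trans (rho_pos i) (@sum_ge_term rho i _) => j; exact: ltW (rho_pos j).
Qed.

Lemma bmin_le l : bmin <= a l l.
Proof.
have Hs : rho l <= \sum_l rho l by apply: (@sum_ge_term rho l) => j; exact: ltW (rho_pos j).
have Hr := rho_pos l. have HG := Gii_ge1 l.
rewrite /bmin /a lerD2l.
apply: le_trans (_ : eps / rho l <= _).
  apply: ler_wpM2l; first exact: ltW.
  rewrite lef_pV2 ?posrE //; lra.
rewrite -mulrA; apply: ler_wpM2l; first exact: ltW.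
by rewrite ler_pdivlMr // mulVf ?gt_eqF.
Qed.

Lemma hh_pow y : nonneg y -> bmin ^+ (norm1 y) <= hh y ^+ d.
Proof.
move=> Hy.
have -> : hh y ^+ d = \prod_(l < d) hh y by rewrite prodr_const card_ord.
rewrite /norm1 -prodrXr; apply: ler_prod => l _; apply/andP; split.
  exact: exprn_ge0 (ltW (lt_trans ltr01 (bmin_gt1 l))).
apply: (le_trans _ (fk_le_hh l y)); apply: (le_trans _ (@fk_ge_diag l y Hy)).
apply: lerXn2r; rewrite ?nnegrE ?bmin_le //.
  exact: ltW (lt_trans ltr01 (bmin_gt1 l)).
exact: ltW (a_gt0 l l).
Qed.

Definition Sset (i l : 'I_d) : bool := (l != i) && (0 < G l i).
Definition ss (i : 'I_d) (y : Zvec d) : nat :=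
  (\sum_(l < d) (if Sset i l then absz (y l) else 0))%N.

Lemma a_noS i l : ~~ Sset i l -> l != i -> a l i = 1.
Proof.
rewrite /Sset => HS Hl; move: HS; rewrite Hl /= -leNgt => HG.
rewrite /a; have -> : G l i = 0 by apply/eqP; rewrite eq_le HG Gge0.
by rewrite mulr0 mul0r addr0.
Qed.

Lemma fk_boundA i y : nonneg y -> y i = 0 -> fk i y <= Amax ^+ ss i y.
Proof.
move=> Hy Hi; rewrite fk_nat // /ss -prodrXr; apply: ler_prod => l _.
apply/andP; split; first exact: exprn_ge0 (ltW (a_gt0 l i)).
case HS: (Sset i l).
  apply: lerXn2r; rewrite ?nnegrE; [exact: ltW (a_gt0 l i) | | exact: Amax_ge].
  exact: le_trans (ltW (a_gt0 l i)) (Amax_ge l i).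
case: (eqVneq l i) => [->|Hl]; first by rewrite Hi /= !expr0.
by rewrite a_noS ?HS // expr1n expr0.
Qed.

Lemma theta_exists i p : 0 < P p i ->
  exists t, [/\ 0 <= t, t < 1 & forall l, Sset i l -> a l i <= t * a l p].
Proof.
move=> Hp.
pose r l := if Sset i l then a l i / a l p else 0.
have [lm Hlm] := @exists_max R _ i r.
have alt : forall l, Sset i l -> a l i < a l p.
  move=> l /andP[Hli HG]; have [p' [Hp' _ Hlt]] := @G_up l i Hli HG.
  have Ep : p' = p := branch _ _ _ Hp' Hp.
  by rewrite -Ep /a ltrD2l -!mulrA ltr_pM2l.
exists (r lm); split.
- by have := Hlm i; rewrite /r /Sset eqxx /=.
- rewrite /r; case: ifP => HS; last exact: ltr01.
  by rewrite ltr_pdivrMr ?a_gt0 // mul1r; exact: alt.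
- move=> l HS; have := Hlm l; rewrite /r HS => H.
  by rewrite -ler_pdivrMr ?a_gt0.
Qed.

Lemma fk_bound_par i p t y : nonneg y -> y i = 0 -> 0 <= t ->
  (forall l, Sset i l -> a l i <= t * a l p) -> fk i y <= t ^+ ss i y * fk p y.
Proof.
move=> Hy Hi Ht H.
rewrite !fk_nat // /ss -prodrXr -big_split /=; apply: ler_prod => l _.
apply/andP; split; first exact: exprn_ge0 (ltW (a_gt0 l i)).
case HS: (Sset i l).
  rewrite -exprMn; apply: lerXn2r; rewrite ?nnegrE; last exact: H.
    exact: ltW (a_gt0 l i).
  by apply: mulr_ge0 => //; exact: ltW (a_gt0 l p).
rewrite expr0 mul1r; case: (eqVneq l i) => [->|Hl]; first by rewrite Hi /= !expr0.
rewrite a_noS ?HS // expr1n; exact: exprn_ege1 (a_ge1 l p).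
Qed.

Lemma dom i (e : R) : 0 < e -> exists N, forall y, nonneg y -> y i = 0 ->
  (N <= norm1 y)%N -> fk i y <= e * hh y.
Proof.
move=> He.
have [K HK] : exists K, forall y, nonneg y -> y i = 0 -> (K <= ss i y)%N ->
    fk i y <= e * hh y.
  case: (pickP (fun m => 0 < P m i)) => [p Hp|Hn].
    have [t [Ht0 Ht1 Ht]] := @theta_exists i p Hp.
    have [K HtK] := @small_power R t e Ht0 Ht1 He.
    exists K => y Hy Hi HKs.
    apply: le_trans (@fk_bound_par i p t y Hy Hi Ht0 Ht) _.
    apply: ler_pM; [exact: exprn_ge0 | exact: ltW (fk_gt0 p y) | | exact: fk_le_hh].
    exact: le_trans (ler_wiXn2l Ht0 (ltW Ht1) HKs) HtK.
  exists 1%N => y Hy Hi.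
  have -> : ss i y = 0%N.
    rewrite /ss big1 // => l _; case HS: (Sset i l) => //.
    move: HS => /andP[Hl HG].
    by rewrite (@G_noparent i l (fun m => negbT (Hn m)) Hl) ltxx in HG.
  by [].
have Hd : (0 < d)%N := leq_ltn_trans (leq0n i) (ltn_ord i).
set C := (Amax ^+ K / e) ^+ d.
have [N HN] := @big_power R bmin C (bmin_gt1 i).
exists N => y Hy Hi HNy.
case: (leqP K (ss i y)) => Hs; first exact: HK.
have HA1 : 1 <= Amax := le_trans (a_ge1 i i) (Amax_ge i i).
have H1 : fk i y <= Amax ^+ K := le_trans (@fk_boundA i y Hy Hi) (ler_weXn2l HA1 (ltnW Hs)).
have H2 : C <= hh y ^+ d.
  apply: le_trans HN _; apply: (le_trans _ (@hh_pow y Hy)).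
  by apply: ler_weXn2l => //; exact: ltW (bmin_gt1 i).
have H3 : Amax ^+ K / e <= hh y.
  move: H2; rewrite /C ler_pXn2r // nnegrE.
    by apply: divr_ge0; [exact: exprn_ge0 (le_trans ler01 HA1) | exact: ltW].
  exact: ltW (hh_gt0 i y).
move: H3; rewrite ler_pdivrMr // => H3.
by rewrite mulrC; exact: le_trans H1 H3.
Qed.

Lemma gen_lin (F : 'I_d -> Zvec d -> R) y :
  gen lam mu P (fun x => \sum_k F k x) y = \sum_k gen lam mu P (F k) y.
Proof.
rewrite /gen exchange_big /=; apply: eq_bigr => w _; cbv zeta.
rewrite if_mul -sumrB mulr_sumr mulr_sumr; apply: eq_bigr => k _.
by rewrite if_mul.
Qed.

Definition kap k := eps * nu k / rho k.
Definition cc k := kap k - eps * mu k / (rho k + eps * G k k).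
Definition Ck k (y : Zvec d) := if (0 < y k)%R then cc k else kap k.

Lemma gen_hh y : nonneg y -> gen lam mu P hh y = \sum_k fk k y * Ck k y.
Proof.
move=> Hy; rewrite /hh gen_lin; apply: eq_bigr => k _.
rewrite gen_fk // /Ck /cc /kap; case: (0 < y k)%R => /=; ring.
Qed.

Lemma upper (i0 : 'I_d) M : (forall k, cc k <= M) -> forall del, 0 < del ->
  exists N, forall y, nonneg y -> (N <= norm1 y)%N ->
  gen lam mu P hh y / hh y <= M + del.
Proof.
move=> HM del Hdel.
set L := \sum_k `|kap k - M| + 1.
have HL : 0 < L by rewrite /L ltr_pwDr // sumr_ge0.
have Hd : (0 < d)%N := leq_ltn_trans (leq0n i0) (ltn_ord i0).
have Hdr : 0 < d%:R :> R by rewrite ltr0n.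
set e := del / (L * d%:R).
have He : 0 < e by apply: divr_gt0 => //; apply: mulr_gt0.
have HN : forall k, exists N, forall y, nonneg y -> y k = 0 ->
   (N <= norm1 y)%N -> fk k y <= e * hh y := fun k => @dom k e He.
pose Nf k := proj1_sig (cid (HN k)).
exists (\max_(k < d) Nf k)%N => y Hy Hny.
have Hh := hh_gt0 i0 y.
rewrite ler_pdivrMr //.
have Hterm : forall k, fk k y * (Ck k y - M - del) <= L * e * hh y - del * fk k y.
  move=> k; have Hf := fk_gt0 k y.
  rewrite /Ck; case: ifP => Hyk.
    have := HM k; have : 0 <= L * e * hh y by apply: mulr_ge0; [apply: mulr_ge0|]; exact: ltW.
    nra.
  have Hy0 : y k = 0.
    by move/forallP: Hy => /(_ k); move: Hyk; rewrite lt_def; case: eqP => //= _ ->.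
  have Hb := proj2_sig (cid (HN k)) y Hy Hy0 (leq_trans (leq_bigmax_cond _ (erefl true)) Hny).
  have Hk : kap k - M <= L.
    apply: le_trans (ler_norm _) _; rewrite /L.
    apply: le_trans (_ : \sum_k `|kap k - M| <= _); last by rewrite lerDl.
    by apply: (@sum_ge_term (fun k => `|kap k - M|)) => j.
  have : fk k y * (kap k - M) <= fk k y * L by apply: ler_wpM2l => //; exact: ltW.
  have : fk k y * L <= e * hh y * L by apply: ler_wpM2r => //; exact: ltW.
  nra.
have Hsum : \sum_(k < d) fk k y * (Ck k y - M - del) <= \sum_(k < d) (L * e * hh y - del * fk k y) by apply: ler_sum => k _; exact: Hterm k.
move: Hsum; rewrite sumrB -mulr_sumr sumr_const card_ord.
have E : \sum_(i < d) fk i y * (Ck i y - M - del) = gen lam mu P hh y - (M + del) * hh y.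
  rewrite gen_hh // /hh mulr_sumr -sumrB; apply: eq_bigr => k _; ring.
rewrite E /e.
have -> : \sum_(i < d) del * fk i y = del * hh y by rewrite /hh mulr_sumr.
have -> : L * (del / (L * d%:R)) * (hh y *+ d) = del * hh y.
  rewrite -mulr_natr; field; apply/andP; split; exact: lt0r_neq0.
move=> H; lra.
Qed.

Lemma lower j : forall del, 0 < del -> forall N : nat, exists y,
  [/\ nonneg y, (N <= norm1 y)%N & cc j - del <= gen lam mu P hh y / hh y].
Proof.
move=> del Hdel N.
set L := \sum_k (`|kap k - cc j| + `|cc k - cc j|) + 1.
have HL : 0 < L by rewrite /L ltr_pwDr // sumr_ge0 // => k _; apply: addr_ge0.
have Hd : (0 < d)%N := leq_ltn_trans (leq0n j) (ltn_ord j).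
have Hdr : 0 < d%:R :> R by rewrite ltr0n.
set e := del / (L * d%:R).
have He : 0 < e by apply: divr_gt0 => //; apply: mulr_gt0.
pose r l := if l == j then 0 else a j l / a j j.
have [lm Hlm] := @exists_max R _ j r.
have Hajj := a_gt0 j j.
have alt : forall l, l != j -> a j l < a j j.
  move=> l Hl; have := @F_strict j l Hl.
  by rewrite /a ltrD2l -!mulrA ltr_pM2l.
set t := r lm.
have Ht0 : 0 <= t by have := Hlm j; rewrite /r eqxx.
have Ht1 : t < 1.
  rewrite /t /r; case: ifP => Hl; first exact: ltr01.
  by rewrite ltr_pdivrMr // mul1r; apply: alt; rewrite Hl.
have Hat : forall l, l != j -> a j l <= t * a j j.
  move=> l Hl; have := Hlm l; rewrite /r (negbTE Hl) => H.
  by rewrite -ler_pdivrMr.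
have [n0 Hn0] := @small_power R t e Ht0 Ht1 He.
set n := (n0 + N).+1.
pose y : Zvec d := [ffun k => if k == j then Posz n else 0].
have Hy : nonneg y by apply/forallP => k; rewrite ffunE; case: (k == j).
have Hny : norm1 y = n.
  rewrite /norm1 (bigD1 j) //= big1 ?addn0; first by rewrite ffunE eqxx.
  by move=> k /negbTE Hk; rewrite ffunE Hk.
have Hfk : forall k, fk k y = a j k ^+ n.
  move=> k; rewrite fk_nat // (bigD1 j) //= big1 ?mulr1; first by rewrite ffunE eqxx.
  by move=> l /negbTE Hl; rewrite ffunE Hl expr0.
have Hfj := fk_gt0 j y.
have Hsmall : forall k, k != j -> fk k y <= e * fk j y.
  move=> k Hk; rewrite !Hfk.
  apply: le_trans (_ : (t * a j j) ^+ n <= _).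
    apply: lerXn2r; rewrite ?nnegrE; [exact: ltW (a_gt0 j k) | | exact: Hat].
    by apply: mulr_ge0 => //; exact: ltW.
  rewrite exprMn; apply: ler_wpM2r; first exact: exprn_ge0 (ltW Hajj).
  apply: le_trans Hn0; apply: ler_wiXn2l => //; first exact: ltW.
  by rewrite /n; apply: leqW; apply: leq_addr.
exists y; split => //; first by rewrite Hny /n; apply: leqW; apply: leq_addl.
have Hh := hh_gt0 j y.
rewrite ler_pdivlMr //.
have Hterm : forall k, (k == j)%:R * del * fk j y - L * e * fk j y
    <= fk k y * (Ck k y - cc j + del).
  move=> k; case: (eqVneq k j) => [->|Hk].
    have Hyj : y j = Posz n by rewrite /y ffunE eqxx.
    rewrite /Ck Hyj /=.
    have : 0 <= L * e * fk j y by apply: mulr_ge0; [apply: mulr_ge0|]; exact: ltW.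
    have -> : (true : nat)%:R = 1 :> R by [].
    lra.
  have Hyk : y k = 0 by rewrite /y ffunE (negbTE Hk).
  rewrite /Ck Hyk ltxx.
  have Hf := fk_gt0 k y.
  have Hk1 : - L <= kap k - cc j.
    rewrite lerNl; apply: le_trans (_ : `|kap k - cc j| <= _).
      by rewrite -normrN; exact: ler_norm.
    rewrite /L; apply: le_trans (_ : \sum_k (`|kap k - cc j| + `|cc k - cc j|) <= _); last by rewrite lerDl.
    apply: le_trans (@sum_ge_term (fun k => `|kap k - cc j| + `|cc k - cc j|) k _).
      by rewrite lerDl.
    by move=> l; apply: addr_ge0.
  have := Hsmall k Hk.
  have : fk k y * (- L) <= fk k y * (kap k - cc j) by apply: ler_wpM2l => //; exact: ltW.
  have -> : (false : nat)%:R = 0 :> R by [].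
  nra.
have Hsum : \sum_(k < d) ((k == j)%:R * del * fk j y - L * e * fk j y)
    <= \sum_(k < d) fk k y * (Ck k y - cc j + del) by apply: ler_sum => k _; exact: Hterm.
have E : \sum_(k < d) fk k y * (Ck k y - cc j + del) = gen lam mu P hh y - (cc j - del) * hh y.
  rewrite gen_hh // /hh mulr_sumr -sumrB; apply: eq_bigr => k _; ring.
move: Hsum; rewrite E sumrB sumr_const card_ord.
have -> : \sum_(k < d) (k == j)%:R * del * fk j y = del * fk j y.
  rewrite (bigD1 j) //= big1 ?addr0; first by rewrite eqxx mul1r.
  by move=> k /negbTE ->; rewrite !mul0r.
have -> : L * e * fk j y *+ d = del * fk j y.
  rewrite -mulr_natr /e; field; apply/andP; split; exact: lt0r_neq0.
move=> H; lra.
Qed.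

Lemma cc_neg j : (eps%:E < emin (fun i => (rho i / G i i * (mu i / nu i - 1))%R))%E ->
  cc j < 0.
Proof.
move=> H; have := lt_le_trans H (@emin_le R d _ j); rewrite lte_fin => Hj.
have He := eps_gt0.
have Hr := rho_pos j; have HG := Gii_ge1 j; have Hm := mugt0 j.
have Hnu : 0 <= nu j.
  rewrite nu_G; apply: sumr_ge0 => i _; apply: mulr_ge0; [exact: lamge0|exact: Gge0].
have HGn : G j j != 0 by rewrite gt_eqF // (lt_le_trans ltr01 HG).
case: (eqVneq (nu j) 0) => [E0|Hn0].
  move: Hj; rewrite E0 invr0 mulr0 sub0r mulrN1 => Hj.
  have : 0 < rho j / G j j by apply: divr_gt0 => //; exact: lt_le_trans ltr01 HG.
  have := eps_gt0; lra.
have Hnp : 0 < nu j by rewrite lt_def Hn0 Hnu.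
have E1 : rho j / G j j * (mu j / nu j - 1) = rho j * (mu j - nu j) / (G j j * nu j).
  by field; rewrite HGn gt_eqF.
move: Hj; rewrite E1 ltr_pdivlMr; last by apply: mulr_gt0 => //; exact: lt_le_trans ltr01 HG.
move=> Hj.
have Hs : 0 < rho j + eps * G j j by have := Gge0 j j; nra.
have E3 : cc j * (rho j * (rho j + eps * G j j)) = eps * (nu j * (rho j + eps * G j j) - mu j * rho j).
  rewrite /cc /kap; field; rewrite gt_eqF // gt_eqF //.
have Hp : 0 < rho j * (rho j + eps * G j j) by apply: mulr_gt0.
have Hneg : nu j * (rho j + eps * G j j) - mu j * rho j < 0 by nra.
have : eps * (nu j * (rho j + eps * G j j) - mu j * rho j) < 0 by nra.
rewrite -E3 => H3.
nra.
Qed.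

Lemma main_sec (hd : (0 < d)%N) :
  (eps%:E < emin (fun i => (rho i / Gmat P i i * (mu i / nu i - 1))%R))%E ->
  limsup_infty (fun x => gen lam mu P (h_fun (Gmat P) eps rho) x
                          / h_fun (Gmat P) eps rho x)
    = (- (eps%:E * emin (fun i => (mu i / (rho i + eps * Gmat P i i) - nu i / rho i)%R)))%E
  /\ (- (eps%:E * emin (fun i => (mu i / (rho i + eps * Gmat P i i) - nu i / rho i)%R)) < 0)%E.
Proof.
move=> Hemin.
pose i0 : 'I_d := Ordinal hd.
set g := fun i => (mu i / (rho i + eps * Gmat P i i) - nu i / rho i)%R.
have [j Hj] := @exists_min R _ i0 g.
have Hcc : forall k, cc k = - (eps * g k) by move=> k; rewrite /cc /kap /g; ring.
have Hmax : forall k, cc k <= cc j.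
  by move=> k; rewrite !Hcc lerN2; apply: ler_wpM2l => //; exact: ltW.
rewrite (@emin_eq R d g j Hj).
have -> : (- (eps%:E * (g j)%:E))%E = (cc j)%:E by rewrite -EFinM -EFinN Hcc.
split; last by rewrite lte_fin; exact: cc_neg.
rewrite /limsup_infty.
apply/le_anti/andP; split.
- apply/lee_addgt0Pr => del Hdel.
  have [N HN] := @upper i0 (cc j) Hmax del Hdel.
  apply: ge_ereal_inf; eexists; first by exists N.
  apply/ereal_supP => z [x [Hx HNx] <-].
  by rewrite lee_fin; exact: HN x Hx HNx.
- apply/ereal_infP => z [N _ <-].
  apply/lee_subgt0Pr => del Hdel.
  have [y [Hy HNy Hr]] := @lower j del Hdel N.
  apply: le_ereal_sup_tmp; eexists; first by exists y.
  by rewrite -EFinB lee_fin.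
Qed.
End Part1.

Theorem corollary3p1 (R : realType) (d : nat) (lam mu : 'I_d -> R)
  (P : 'M[R]_d) (nu rho : 'I_d -> R) (eps : R) :
  (0 < d)%N ->
  (forall i, 0 <= lam i) ->
  (forall i, 0 < mu i) ->
  (forall i j, 0 <= P i j) ->
  (forall i, P i i = 0) ->
  (forall i, \sum_(j < d) P i j <= 1) ->
  (* (A) *)
  irreducibleA lam mu P ->
  (* nu solves the traffic equations *)
  (forall j, nu j = lam j + \sum_(i < d) nu i * P i j) ->
  (* (B) *)
  (forall i, nu i < mu i) ->
  (* branching structure *)
  (forall i j k, 0 < P j i -> 0 < P k i -> j = k) ->
  (forall i, \sum_(j < d) rho j * P j i < rho i) ->
  0 < eps ->
  (eps%:E < emin (fun i => (rho i / Gmat P i i * (mu i / nu i - 1))%R))%E ->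
  limsup_infty (fun x => gen lam mu P (h_fun (Gmat P) eps rho) x
                          / h_fun (Gmat P) eps rho x)
    = (- (eps%:E * emin (fun i => (mu i / (rho i + eps * Gmat P i i) - nu i / rho i)%R)))%E
  /\ (- (eps%:E * emin (fun i => (mu i / (rho i + eps * Gmat P i i) - nu i / rho i)%R)) < 0)%E.
Proof.
move=> hd Hlam Hmu HP Hii Hsum Hirr Htr _ Hbr Hrho Heps Hemin.
by apply: main_sec.
Qed.
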